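(* For any $\eta\in(0,\tfrac12)$ and any sequence of true labels $y_1,\dots,y_T$ (and expert advice), the probabilities $p_1,\dots,p_T$ and estimated losses $\hat\ell_1,\dots,\hat\ell_T$ produced by EXP4.AT with learning rate $\eta$ satisfy $$\sum_{t=1}^T\sum_{y\in\{0,1\}}p_t^y\hat\ell_t(y) - \inf_{j\in[N]}\sum_{t=1}^T\hat\ell_t(\mathcal{E}^j_t) \le \frac{\ln N}{\eta} + \eta\sum_{t=1}^T\hat\ell_t(1) + \eta\sum_{t=1}^T p_t^1(1-p_t^1)\hat\ell_t(0)^2 + \eta\sum_{t=1}^T p_t^1\hat\ell_t(1)^2.$$
   Context: Binary prediction with $N$ experts under apple tasting feedback. EXP4.AT with learning rate $\eta\in(0,\tfrac12)$: let $q_1$ be uniform on $[N]$. In each round $t=1,\dots,T$: receive advice $\mathcal{E}^1_t,\dots,\mathcal{E}^N_t\in\{0,1\}$; set $p_t^1=(1-\eta)\sum_{i=1}^N q_t^i\mathcal{E}^i_t+\eta$ and $p_t^0=1-p_t^1$; predict $\hat y_t=1$ with probability $p_t^1$ and $\hat y_t=0$ otherwise; the true label $y_t$ is observed only if $\hat y_t=1$; define $\hat\ell_t(y)=\mathbb{1}\{y\ne y_t\}\mathbb{1}\{\hat y_t=1\}/p_t^1$ for $y\in\{0,1\}$; update $q_{t+1}^i=\frac{q_t^i\exp(-\eta\hat\ell_t(\mathcal{E}^i_t))}{\sum_{j=1}^N q_t^j\exp(-\eta\hat\ell_t(\mathcal{E}^j_t))}$. The inequality holds for every realization of the algorithm's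 random predictions. *)

(* Defs.v *)
From HB Require Import structures.
From mathcomp Require Import all_boot all_order all_algebra.
From mathcomp Require Import reals sequences exp.
Set Implicit Arguments. Unset Strict Implicit. Unset Printing Implicit Defensive.
Import Order.TTheory GRing.Theory Num.Theory.
Local Open Scope ring_scope.

(* Rounds are indexed t = 0, 1, 2, ... (round t here = round t+1 of the paper).
   E t i  : advice of expert i in round t (in {0,1}, encoded as bool).
   y t    : true label of round t.
   yh t   : the realized prediction \hat y_t of the algorithm in round t. *)

Section EXP4AT.
Variables (R : realType) (N : nat) (eta : R)
          (E : nat -> 'I_N -> bool) (y yh : nat -> bool).

Definition p1_of (t : nat) (qt : 'I_N -> R) : R :=
  (1 - eta) * (\sum_(i < N) qt i * (E t i)%:R) + eta.

Definition lhat_of (t : nat) (qt : 'I_N -> R) (b : bool) : R :=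
  (b != y t)%:R * (yh t)%:R / p1_of t qt.

Fixpoint q (t : nat) : 'I_N -> R :=
  match t with
  | 0 => fun _ => (N%:R)^-1
  | t'.+1 =>
      let qt := q t' in
      fun i => qt i * expR (- (eta * lhat_of t' qt (E t' i))) /
               (\sum_(j < N) qt j * expR (- (eta * lhat_of t' qt (E t' j))))
  end.

Definition p1 (t : nat) : R := p1_of t (q t).

Definition pr (t : nat) (b : bool) : R := if b then p1 t else 1 - p1 t.

Definition lhat (t : nat) (b : bool) : R := lhat_of t (q t) b.

End EXP4AT.

(* Main.v *)
Require Import Defs.
From HB Require Import structures.
From mathcomp Require Import all_boot all_order all_algebra.
From mathcomp Require Import reals sequences exp.
From mathcomp Require Import ring lra.
Import Order.TTheory GRing.Theory Num.Theory.
Local Open Scope ring_scope.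

Section Aux.
Context {R : realType}.
Implicit Types x z e a p : R.

Lemma ln_le_sub1 z : 0 < z -> ln z <= z - 1.
Proof.
move=> z0; have := @le_ln1Dx R (z - 1).
rewrite (_ : 1 + (z - 1) = z); last by ring.
apply; lra.
Qed.

Lemma expN_le x : 0 <= x -> expR (- x) * (1 + x) <= 1.
Proof.
move=> x0; have h1 := expR_ge1Dx x; have h2 := expRxMexpNx_1 x.
have h3 := expR_gt0 (- x). nra.
Qed.

Lemma expN2_le x : 0 <= x -> expR (- x) * (1 + x / 2) ^+ 2 <= 1.
Proof.
move=> x0.
have -> : expR (- x) = expR (- (x / 2)) * expR (- (x / 2)).
  by rewrite -expRD; congr expR; field.
have h := expN_le (x / 2) ltac:(lra).
have h3 := expR_gt0 (- (x / 2)).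
set u := expR (- (x / 2)) * (1 + x / 2).
have u0 : 0 <= u by rewrite /u; apply: mulr_ge0; lra.
have -> : expR (- (x / 2)) * expR (- (x / 2)) * (1 + x / 2) ^+ 2 = u * u
  by rewrite /u; ring.
have u1 : u <= 1 by exact: h.
nra.
Qed.

Lemma expP2_le x : 0 <= x -> x <= 1 -> expR x * (1 - x / 2) ^+ 2 <= 1.
Proof.
move=> x0 x1.
have -> : expR x = expR (x / 2) * expR (x / 2).
  by rewrite -expRD; congr expR; field.
have h1 := expR_ge1Dx (- (x / 2)).
have h2 := expRxMexpNx_1 (x / 2).
have h3 := expR_gt0 (x / 2).
set v := expR (x / 2) * (1 - x / 2).
have v0 : 0 <= v by rewrite /v; apply: mulr_ge0; lra.
have v1 : v <= 1 by rewrite /v; nra.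
have -> : expR (x / 2) * expR (x / 2) * (1 - x / 2) ^+ 2 = v * v
  by rewrite /v; ring.
nra.
Qed.

Lemma polyA e p : 0 < e -> e < 2^-1 -> e <= p -> p <= 2^-1 ->
  - (1 - e) * (e + (1 - e) * p) * (p - e / 2) ^+ 2
  + p * (p - e) * (p - e / 4) <= 0.
Proof.
move=> e0 e1 ep p1.
have -> : - (1 - e) * (e + (1 - e) * p) * (p - e / 2) ^+ 2
  + p * (p - e) * (p - e / 4) =
  e * ((p - e / 2) ^+ 2 * ((2 - e) * p - (1 - e)) - p ^+ 2 / 4) by field.
rewrite pmulr_rle0 //.
set A := (p - e / 2) ^+ 2.
have A0 : 0 <= A by rewrite /A sqr_ge0.
have Ap : A <= p ^+ 2 by rewrite /A; nra.
have B1 : (2 - e) * p - (1 - e) <= 4^-1 by nra.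
case: (lerP ((2 - e) * p - (1 - e)) 0) => hB.
  have : A * ((2 - e) * p - (1 - e)) <= 0 by nra.
  have : 0 <= p ^+ 2 by apply: sqr_ge0.
  lra.
nra.
Qed.

End Aux.

Section R1.
Variable R : realType.

Lemma round_y0 (e a p : R) : 0 < e -> e < 2^-1 -> 0 <= a -> a <= 1 ->
  p = (1 - e) * a + e ->
  ln (a * expR (- (e * p^-1)) + (1 - a) * 1) <= e * (2 * (e * p^-1) - 1).
Proof.
move=> e0 e1 a0 a1 hp.
have pe : e <= p by rewrite hp; nra.
have p0 : 0 < p by lra.
have hpv : p * p^-1 = 1 by rewrite mulfV // gt_eqF.
set x := e * p^-1.
have x0 : 0 <= x by rewrite /x; apply: mulr_ge0; [lra | rewrite invr_ge0; lra].
set E := expR (- x).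
have hE : E * (1 + x) <= 1 by exact: expN_le.
have E0 : 0 < E by exact: expR_gt0.
have W0 : 0 < a * E + (1 - a) * 1 by nra.
apply: (le_trans (ln_le_sub1 _ W0)).
have hid : e - a * x - e * x * (1 - a) = e * (1 - p * p^-1).
  by rewrite /x hp; ring.
rewrite hpv subrr mulr0 in hid.
have h1 : a * (E * (1 + x)) <= a * 1 by rewrite ler_wpM2l.
have h2 : 0 <= e * x * a by apply: mulr_ge0 => //; apply: mulr_ge0; lra.
have h3 : 0 <= e * (x * x) by apply: mulr_ge0; [lra | exact: mulr_ge0].
have h : (1 + x) * (a * E + (1 - a) * 1 - 1 - e * (2 * x - 1)) <= 0.
  have -> : (1 + x) * (a * E + (1 - a) * 1 - 1 - e * (2 * x - 1)) =
    a * (E * (1 + x)) - a - a * x - 2 * (e * (x * x)) - e * x + e by ring.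
  lra.
rewrite pmulr_rle0 in h; last lra.
lra.
Qed.

Lemma round_y1 (e a p : R) : 0 < e -> e < 2^-1 -> 0 <= a -> a <= 1 ->
  p = (1 - e) * a + e ->
  ln (a * 1 + (1 - a) * expR (- (e * p^-1))) <= - (1 - e) ^+ 2 * (1 - a) * (e * p^-1).
Proof.
move=> e0 e1 a0 a1 hp.
have pe : e <= p by rewrite hp; nra.
have p0 : 0 < p by lra.
have p1 : p <= 1 by rewrite hp; nra.
have hpv : p * p^-1 = 1 by rewrite mulfV // gt_eqF.
have pi0 : 0 < p^-1 by rewrite invr_gt0.
set x := e * p^-1.
have x0 : 0 <= x by rewrite /x; apply: mulr_ge0; lra.
have x1 : x <= 1.
  rewrite /x -[e](mulr1) -[X in _ <= X]hpv. nra.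
set E := expR (- x).
have E0 : 0 < E by exact: expR_gt0.
have W0 : 0 < a * 1 + (1 - a) * E by nra.
case: (lerP (2^-1) p) => hp2.
  apply: (le_trans (ln_le_sub1 _ W0)).
  have hE := expN2_le _ x0; rewrite -/E in hE.
  set s := (1 + x / 2) ^+ 2 in hE.
  have s0 : 1 + x <= s by rewrite /s; nra.
  have x2e : x <= 2 * e.
    have : p^-1 <= 2.
      have : p * p^-1 <= p * 2 by rewrite hpv; lra.
      by rewrite ler_pM2l.
    rewrite /x; nra.
  have hs : (1 - e) ^+ 2 * s <= 1.
    have h1 : 0 <= (1 - e) * (1 + x / 2) by apply: mulr_ge0; lra.
    have h2 : (1 - e) * (1 + x / 2) <= 1 by nra.
    rewrite /s (_ : (1 - e) ^+ 2 * (1 + x / 2) ^+ 2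
       = ((1 - e) * (1 + x / 2)) * ((1 - e) * (1 + x / 2))); last by ring.
    nra.
  have hk : s * (1 - (1 - e) ^+ 2 * x - E) >= 0 by nra.
  rewrite pmulr_rge0 in hk; last lra.
  nra.
set F := expR x.
have EF : E * F = 1 by rewrite /E /F mulrC expRxMexpNx_1.
have F0 : 0 < F by exact: expR_gt0.
have V0 : 0 < a * F + (1 - a) by nra.
have -> : a * 1 + (1 - a) * E = E * (a * F + (1 - a)).
  by rewrite mulrDr mulrA (mulrC E a) -mulrA EF; ring.
rewrite lnM ?posrE // /E expRK.
have hl := ln_le_sub1 _ V0.
have hF := expP2_le _ x0 x1; rewrite -/F in hF.
set t := 1 - x / 2 in hF.
have t0 : 0 < t by rewrite /t; lra.
have hP := polyA _ _ e0 e1 pe (ltW hp2).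
have iden : (1 - e) * p ^+ 3 * (t ^+ 2 * (- x - a + (1 - e) ^+ 2 * (1 - a) * x) + a)
   = e * (- (1 - e) * (e + (1 - e) * p) * (p - e / 2) ^+ 2
         + p * (p - e) * (p - e / 4)).
  rewrite /t /x hp; field.
  by rewrite -hp gt_eqF.
have hq : t ^+ 2 * (- x - a + (1 - e) ^+ 2 * (1 - a) * x) + a <= 0.
  have : (1 - e) * p ^+ 3 * (t ^+ 2 * (- x - a + (1 - e) ^+ 2 * (1 - a) * x) + a) <= 0.
    by rewrite iden; nra.
  rewrite pmulr_rle0 //; apply: mulr_gt0; [lra | exact: exprn_gt0].
have ht2 : 0 < t ^+ 2 by exact: exprn_gt0.
have : t ^+ 2 * (- x + (a * F + (1 - a) - 1) + (1 - e) ^+ 2 * (1 - a) * x) <= 0 by nra.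
rewrite pmulr_rle0 //; lra.
Qed.

End R1.

Section Main.
Variables (R : realType) (N : nat) (eta : R)
  (E : nat -> 'I_N -> bool) (y yh : nat -> bool).
Hypotheses (hN : (0 < N)%N) (e0 : 0 < eta) (e1 : eta < 2^-1).

Definition av t (qt : 'I_N -> R) := \sum_(i < N) qt i * (E t i)%:R.

Lemma decomp t (qt : 'I_N -> R) : \sum_i qt i = 1 ->
  \sum_j qt j * expR (- (eta * lhat_of eta E y yh t qt (E t j))) =
  av t qt * expR (- (eta * lhat_of eta E y yh t qt true))
  + (1 - av t qt) * expR (- (eta * lhat_of eta E y yh t qt false)).
Proof.
move=> hs.
set f1 := expR (- (eta * lhat_of eta E y yh t qt true)).
set f0 := expR (- (eta * lhat_of eta E y yh t qt false)).
rewrite (eq_bigr (fun j => qt j * (E t j)%:R * f1 + (qt j - qt j * (E t j)%:R) * f0)); last first.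
  by move=> j _; case: (E t j) => /=; rewrite /f1 /f0; ring.
rewrite big_split /= -!mulr_suml sumrB hs.
by [].
Qed.

Lemma av_bounds t (qt : 'I_N -> R) : (forall i, 0 < qt i) -> \sum_i qt i = 1 ->
  0 <= av t qt /\ av t qt <= 1.
Proof.
move=> hp hs; split.
  by apply: sumr_ge0 => i _; apply: mulr_ge0; [exact: ltW | case: (E t i)].
rewrite -hs; apply: ler_sum => i _; have := hp i.
by case: (E t i) => /= h; lra.
Qed.

Lemma W_pos t (qt : 'I_N -> R) : (forall i, 0 < qt i) -> \sum_i qt i = 1 ->
  0 < \sum_j qt j * expR (- (eta * lhat_of eta E y yh t qt (E t j))).
Proof.
move=> hp hs; rewrite decomp //.
have [a0 a1] := av_bounds t _ hp hs.
have h1 := expR_gt0 (- (eta * lhat_of eta E y yh t qt true)).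
have h0 := expR_gt0 (- (eta * lhat_of eta E y yh t qt false)).
nra.
Qed.

Lemma inv t : (forall i, 0 < q eta E y yh t i) /\ \sum_i q eta E y yh t i = 1.
Proof.
elim: t => [|t [hp hs]] /=.
  have N0 : 0 < N%:R :> R by rewrite ltr0n.
  split; first by move=> i; rewrite invr_gt0.
  rewrite sumr_const card_ord -[X in X = 1](mulr_natr) mulVf // gt_eqF //.
have W0 := W_pos t _ hp hs.
split.
  move=> i; apply: divr_gt0 => //; apply: mulr_gt0 => //; exact: expR_gt0.
by rewrite -mulr_suml mulfV // gt_eqF.
Qed.

Definition W t := \sum_j q eta E y yh t j *
   expR (- (eta * lhat eta E y yh t (E t j))).

Lemma potential (j : 'I_N) t : ln (q eta E y yh t j) =
  - ln (N%:R) - eta * \sum_(s < t) lhat eta E y yh s (E s j)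
  - \sum_(s < t) ln (W s).
Proof.
elim: t => [|t IH].
  rewrite !big_ord0 /= lnV ?posrE ?ltr0n //; ring.
have [hp hs] := inv t.
have W0 := W_pos t _ hp hs.
rewrite !big_ord_recr /=.
rewrite ln_div ?posrE //; last by apply: mulr_gt0 => //; exact: expR_gt0.
rewrite lnM ?posrE //; last exact: expR_gt0.
rewrite expRK IH /W /lhat; ring.
Qed.

Lemma round t :
  \sum_(b : bool) pr eta E y yh t b * lhat eta E y yh t b + ln (W t) / eta
  <= eta * lhat eta E y yh t true
     + eta * (p1 eta E y yh t * (1 - p1 eta E y yh t) * lhat eta E y yh t false ^+ 2)
     + eta * (p1 eta E y yh t * lhat eta E y yh t true ^+ 2).
Proof.
have e0' := e0; have e1' := e1.
have [hp hs] := inv t.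
have [a0 a1] := av_bounds t _ hp hs.
rewrite big_bool /= /W /lhat decomp //.
have hpdef : p1 eta E y yh t = (1 - eta) * av t (q eta E y yh t) + eta by [].
rewrite /lhat_of -/(p1 eta E y yh t).
move: hpdef a0 a1; set a := av t _; set p := p1 eta E y yh t => hpdef a0 a1.
clearbody a p.
have pe : eta <= p by rewrite hpdef; nra.
have p0 : 0 < p by lra.
have hpv : p * p^-1 = 1 by rewrite mulfV // gt_eqF.
case: (yh t); case: (y t) => /=.
-
  rewrite !(mul0r, mulr1, mul1r, mulr0, oppr0, expR0, expr0n) /=.
  have h := @round_y1 _ eta a p e0 e1 a0 a1 hpdef.
  rewrite mulr1 in h.
  have h' : ln (a + (1 - a) * expR (- (eta * p^-1))) / eta <=
     (- (1 - eta) ^+ 2 * (1 - a) * (eta * p^-1)) / eta.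
    by rewrite ler_pM2r // invr_gt0.
  have id1 : (- (1 - eta) ^+ 2 * (1 - a) * (eta * p^-1)) / eta =
     - ((1 - eta) ^+ 2 * (1 - a) * p^-1).
    field. by rewrite !gt_eqF.
  have id3 : (1 - eta) ^+ 2 * (1 - a) * p^-1 = (1 - eta) * (1 - p) * p^-1.
    by rewrite hpdef; ring.
  have id2 : eta * (p * (1 - p) * p^-1 ^+ 2) = eta * (1 - p) * (p * p^-1) * p^-1.
    by ring.
  rewrite id2 hpv; rewrite id1 id3 in h'.
  lra.
-
  rewrite !(mul0r, mulr1, mul1r, mulr0, oppr0, expR0, expr0n, addr0) /=.
  have h := @round_y0 _ eta a p e0 e1 a0 a1 hpdef.
  rewrite mulr1 in h.
  have h' : ln (a * expR (- (eta * p^-1)) + (1 - a)) / eta <=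
     (eta * (2 * (eta * p^-1) - 1)) / eta.
    by rewrite ler_pM2r // invr_gt0.
  have id1 : (eta * (2 * (eta * p^-1) - 1)) / eta = 2 * (eta * p^-1) - 1.
    field. by rewrite !gt_eqF.
  have id2 : eta * (p * p^-1 ^+ 2) = eta * (p * p^-1) * p^-1 by ring.
  rewrite id2 hpv; rewrite id1 in h'.
  lra.
- rewrite !(mul0r, mulr1, mul1r, mulr0, oppr0, expR0, expr0n, addr0) /=.
  rewrite (_ : a + (1 - a) = 1); last by ring.
  rewrite ln1 mul0r; lra.
- rewrite !(mul0r, mulr1, mul1r, mulr0, oppr0, expR0, expr0n, addr0) /=.
  rewrite (_ : a + (1 - a) = 1); last by ring.
  rewrite ln1 mul0r; lra.
Qed.
End Main.

Theorem lemma6 (R : realType) (N T : nat) (eta : R)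
  (E : nat -> 'I_N -> bool) (y yh : nat -> bool) :
  (0 < N)%N -> 0 < eta -> eta < 2^-1 ->
  forall j : 'I_N,
    \sum_(t < T) \sum_(b : bool) pr eta E y yh t b * lhat eta E y yh t b
    - \sum_(t < T) lhat eta E y yh t (E t j)
    <= ln (N%:R) / eta
       + eta * \sum_(t < T) lhat eta E y yh t true
       + eta * \sum_(t < T) p1 eta E y yh t * (1 - p1 eta E y yh t)
                             * lhat eta E y yh t false ^+ 2
       + eta * \sum_(t < T) p1 eta E y yh t * lhat eta E y yh t true ^+ 2.
Proof.
move=> hN e0 e1 j.
have pot := @potential R N eta E y yh hN j T.
have [hp hs] := @inv R N eta E y yh hN T.
have qle : q eta E y yh T j <= 1.
  rewrite -hs (bigD1 j) //= lerDl; apply: sumr_ge0 => i _; exact: ltW.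
have lnle := ln_le0 qle.
have rd : \sum_(t < T) (\sum_(b : bool) pr eta E y yh t b * lhat eta E y yh t b
            + ln (W R N eta E y yh t) / eta) <=
          \sum_(t < T) (eta * lhat eta E y yh t true
     + eta * (p1 eta E y yh t * (1 - p1 eta E y yh t) * lhat eta E y yh t false ^+ 2)
     + eta * (p1 eta E y yh t * lhat eta E y yh t true ^+ 2)).
  by apply: ler_sum => t _; exact: round.
rewrite !big_split /= -!mulr_sumr -mulr_suml in rd.
set S1 := \sum_(t < T) \sum_(b : bool) _ in rd *.
set Sj := \sum_(t < T) lhat eta E y yh t (E t j) in pot *.
set LW := \sum_(t < T) ln (W R N eta E y yh t) in pot rd.
set lnN := ln N%:R in pot *.
have h2 : - Sj <= (lnN + LW) / eta.
  rewrite ler_pdivlMr //; nra.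
rewrite mulrDl in h2.
lra.
Qed.
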